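(* Let $q$ be a prime power and $\mathcal{C}$ a $q$-divisible set of points of $\mathrm{PG}(v-1,q)$ (for some $v$) with $2\le n=|\mathcal{C}|\le q^2$. Then either $n=q^2$ or $q+1$ divides $n$. Moreover, every such value of $n$ (i.e. $n=q^2$, and every multiple of $q+1$ in $[2,q^2]$) is the cardinality of some $q$-divisible set of points in some projective space over $\mathbb{F}_q$.
   Context: $\mathrm{PG}(v-1,q)$ denotes the set of $1$-dimensional subspaces (points) of $\mathbb{F}_q^v$; hyperplanes are the $(v-1)$-dimensional subspaces of $\mathbb{F}_q^v$. A set $\mathcal{C}$ of points is called $\Delta$-divisible (for an integer $\Delta\ge1$) if there is an integer $u$ with $|\mathcal{C}\cap H|\equiv u\pmod{\Delta}$ for every hyperplane $H$, where $\mathcal{C}\cap H$ is the set of points of $\mathcal{C}$ contained in $H$. *)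

(* Defs.v *)
From HB Require Import structures.
From mathcomp Require Import all_boot all_order all_algebra all_field.
Set Implicit Arguments. Unset Strict Implicit. Unset Printing Implicit Defensive.
Import GRing.Theory.

(* Subspaces of F^v (row vectors 'rV[F]_v) are represented canonically by
   square matrices A with <<A>>%MS = A (the canonical representative of the
   row space). *)
Definition is_point (F : fieldType) (v : nat) (P : 'M[F]_v) : bool :=
  ((<<P>>%MS == P) && (\rank P == 1%N)).

Definition is_hyperplane (F : fieldType) (v : nat) (H : 'M[F]_v) : bool :=
  ((<<H>>%MS == H) && (\rank H == v.-1)).

Definition point_set (F : finFieldType) (v : nat) (C : {set 'M[F]_v}) : Prop :=
  forall P, P \in C -> is_point P.

Definition hyp_count (F : finFieldType) (v : nat) (C : {set 'M[F]_v}) (H : 'M[F]_v) : nat :=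
  #|[set P in C | (P <= H)%MS]|.

Definition divisible (F : finFieldType) (v : nat) (C : {set 'M[F]_v}) (Delta : nat) : Prop :=
  exists u : nat, forall H : 'M[F]_v, is_hyperplane H ->
    hyp_count C H = u %[mod Delta].

(* Main.v *)
Require Import Defs.
From Stdlib Require Import ZArith Lia.
Open Scope Z_scope.

Lemma final_Z q N n W1 W2 t :
  0 < N -> 1 < q -> 0 <= n -> 0 <= t ->
  q*W1 + n*(q*N) = n*(q*q*N) ->
  q*q*W2 + 2*n*(n*(q*N)) = n*n*(q*q*N) + (n*(q*N) + n*(n-1)*N) ->
  (2*t+1)*W1 <= W2 + q*q*N*(t*(t+1)) ->
  (q-1)*(2*t+1)*(q*q)*n <= (q-1)*(q-1)*n*n + (q-1)*n + t*(t+1)*(q*q*q*q).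
Proof.
intros HN Hq Hn Ht E1 E2 I.
assert (HW1 : W1 = n*N*(q-1)).
{ apply (Z.mul_reg_l _ _ q); [lia|]. lia. }
subst W1.
assert (I2 : q*q*((2*t+1)*(n*N*(q-1))) <= q*q*(W2 + q*q*N*(t*(t+1)))).
{ apply Z.mul_le_mono_nonneg_l; [lia|exact I]. }
assert (I3 : N * ((q-1)*(2*t+1)*(q*q)*n) <= N * ((q-1)*(q-1)*n*n + (q-1)*n + t*(t+1)*(q*q*q*q))).
{ lia. }
apply (Zmult_le_reg_r _ _ N); [lia|]. lia.
Qed.

Lemma final_num q n a b :
  1 < q -> n = a*q + b -> 0 <= b < q -> b <= a -> n < q*q ->
  (forall t, 0 <= t -> (q-1)*(2*t+1)*(q*q)*n <= (q-1)*(q-1)*n*n + (q-1)*n + t*(t+1)*(q*q*q*q)) ->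
  b = a.
Proof.
intros Hq Hn Hb Hba Hnq H.
destruct (Z.eq_dec b a) as [|Hne]; [assumption|exfalso].
assert (Ha : a <= q - 1).
{ destruct (Z_le_gt_dec a (q-1)) as [|Hg]; [assumption|].
  assert (a*q >= q*q) by (apply Z.le_ge; rewrite (Z.mul_comm a q); apply Z.mul_le_mono_nonneg_l; lia). lia. }
remember (a - b) as k eqn:Hk0.
assert (Hk : 1 <= k <= a) by lia.
specialize (H (a-1) ltac:(lia)).
assert (HQ : (q-1)*(q-1)*n*n + (q-1)*n + (a-1)*(a-1+1)*(q*q*q*q) - (q-1)*(2*(a-1)+1)*(q*q)*n
   = a*(a-1) - k*(q-1)*(q*q+1-2*a) + k*k*(q-1)*(q-1)).
{ assert (b = a - k) by lia. subst n b. ring. }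
remember (q*q+1-a*(q+1)) as D0 eqn:HD0e.
assert (HD0 : 2 <= D0).
{ assert (a*(q+1) <= (q-1)*(q+1)) by (apply Z.mul_le_mono_nonneg_r; lia). lia. }
assert (HD : k*(q-1)*(q*q+1-2*a) - k*k*(q-1)*(q-1) = k*(q-1)*(D0 + (a-k)*(q-1))) by (subst D0; ring).
assert (Hf : a*(a-1) < k*(q-1)*(D0 + (a-k)*(q-1))).
{ destruct (Z.eq_dec k a) as [Hka|Hka].
  - rewrite Hka. replace (D0 + (a-a)*(q-1)) with D0 by ring. rewrite <- Z.mul_assoc.
    assert (a*(a-1) < a*((q-1)*D0)).
    { apply Z.mul_lt_mono_pos_l; [lia|]. assert ((q-1)*2 <= (q-1)*D0) by (apply Z.mul_le_mono_nonneg_l; lia). lia. }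
    lia.
  - assert (Hkk0 : 0 <= (k-1)*(a-k-1)) by (apply Z.mul_nonneg_nonneg; lia).
    assert (Hkk : a - 1 <= k*(a-k)) by lia.
    assert (E : k*(q-1)*(D0 + (a-k)*(q-1)) = k*(q-1)*D0 + (k*(a-k))*((q-1)*(q-1))) by ring.
    assert (E1 : (a-1)*((q-1)*(q-1)) <= (k*(a-k))*((q-1)*(q-1))) by (apply Z.mul_le_mono_nonneg_r; [apply Z.mul_nonneg_nonneg|]; lia).
    assert (E2 : a*(a-1) <= (a-1)*((q-1)*(q-1))).
    { rewrite (Z.mul_comm a). apply Z.mul_le_mono_nonneg_l; [lia|].
      assert (q-1 <= (q-1)*(q-1)) by (rewrite <- (Z.mul_1_r (q-1)) at 1; apply Z.mul_le_mono_nonneg_l; lia). lia. }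
    assert (E3 : 0 < k*(q-1)*D0) by (apply Z.mul_pos_pos; [apply Z.mul_pos_pos|]; lia).
    lia. }
lia.
Qed.


Lemma quadZ (w t : Z) : 0 <= w -> 0 <= t -> (2*t+1)*w <= w*w + t*(t+1).
Proof.
intros hw ht. destruct (Z_le_gt_dec w t) as [h|h].
- assert (0 <= (t-w)*(t-w+1)) by (apply Z.mul_nonneg_nonneg; lia). lia.
- assert (0 <= (w-t)*(w-t-1)) by (apply Z.mul_nonneg_nonneg; lia). lia.
Qed.
Close Scope Z_scope.

From HB Require Import structures.
From mathcomp Require Import all_boot all_order all_algebra all_field.
From mathcomp Require Import zify.
Set Implicit Arguments. Unset Strict Implicit. Unset Printing Implicit Defensive.
Import GRing.Theory.
Local Open Scope ring_scope.

Section LA.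
Variables (F : finFieldType) (v : nat).
Local Notation q := #|F|.

Lemma card_rs m (A : 'M[F]_(m,v)) : #|[set u : 'rV[F]_v | (u <= A)%MS]| = (q ^ \rank A)%N.
Proof.
have -> : [set u : 'rV[F]_v | (u <= A)%MS] = [set w *m row_base A | w : 'rV_(\rank A)].
  apply/setP => u; rewrite inE; apply/idP/imsetP.
    rewrite -(eq_row_base A) => /submxP[w ->]; by exists w.
  by case=> w _ ->; rewrite -(eq_row_base A) submxMl.
rewrite card_imset; last first.
  have [B HB] := row_freeP (row_base_free A).
  by apply: (can_inj (g := mulmx^~ B)) => w; rewrite -mulmxA HB mulmx1.
by rewrite card_mx mul1n.
Qed.

Lemma card_ker m (A : 'M[F]_(m,v)) : #|[set y : 'rV[F]_v | y *m A^T == 0]| = (q ^ (v - \rank A))%N.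
Proof.
have -> : [set y : 'rV[F]_v | y *m A^T == 0] = [set y : 'rV[F]_v | (y <= kermx A^T)%MS].
  by apply/setP => y; rewrite !inE sub_kermx.
by rewrite card_rs mxrank_ker mxrank_tr.
Qed.

Definition kill (P : 'M[F]_v) (y : 'rV[F]_v) := P *m y^T == 0.

Lemma killE P y : kill P y = (y *m P^T == 0).
Proof. by rewrite /kill -trmx_eq0 trmx_mul trmxK. Qed.

Lemma card_kill1 P : is_point P -> #|[set y | kill P y]| = (q ^ v.-1)%N.
Proof.
case/andP=> _ /eqP r1.
have -> : [set y | kill P y] = [set y | y *m P^T == 0] by apply/setP=> y; rewrite !inE killE.
by rewrite card_ker r1 subn1.
Qed.

Lemma point_neq (P Q : 'M[F]_v) : is_point P -> is_point Q -> P != Q -> \rank (col_mx P Q) = 2%N.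
Proof.
case/andP=> /eqP gP /eqP rP; case/andP=> /eqP gQ /eqP rQ nPQ.
rewrite -(addsmxE P Q).1.
have := mxrank_sum_cap P Q; rewrite rP rQ.
suff -> : \rank (P :&: Q)%MS = 0%N by rewrite addn0.
apply/eqP; rewrite -leqn0 leqNgt; apply/negP => pos.
have r1 : \rank (P :&: Q)%MS = 1%N.
  by apply/eqP; rewrite eqn_leq pos -rP mxrankS ?capmxSl.
have e1 : (P :&: Q == P)%MS by rewrite -(mxrank_leqif_eq (capmxSl P Q)) r1 rP.
have e2 : (P :&: Q == Q)%MS by rewrite -(mxrank_leqif_eq (capmxSr P Q)) r1 rQ.
have : <<P>>%MS = <<Q>>%MS.
  apply: eq_genmx; exact: (eqmx_trans (eqmx_sym (eqmxP e1)) (eqmxP e2)).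
by rewrite gP gQ => e; rewrite e eqxx in nPQ.
Qed.


Lemma card_kill2 (P Q : 'M[F]_v) : is_point P -> is_point Q -> P != Q ->
  (2 <= v)%N /\ #|[set y | kill P y && kill Q y]| = (q ^ (v - 2))%N.
Proof.
move=> pP pQ nPQ; have r2 := point_neq pP pQ nPQ.
split; first by rewrite -r2 rank_leq_col.
have -> : [set y | kill P y && kill Q y] = [set y | y *m (col_mx P Q)^T == 0].
  apply/setP=> y; rewrite !inE !killE tr_col_mx mul_mx_row row_mx_eq0 //.
by rewrite card_ker r2.
Qed.

Lemma point_rep (P : 'M[F]_v) : is_point P ->
  exists x : 'rV[F]_v, forall y, kill P y = (x *m y^T == 0).
Proof.
case/andP=> _ /eqP r1.
have nz : nz_row P != 0 by rewrite nz_row_eq0 -mxrank_eq0 r1.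
have e : (nz_row P == P)%MS.
  by rewrite -(mxrank_leqif_eq (nz_row_sub P)) rank_rV nz r1.
exists (nz_row P) => y; rewrite /kill -!sub_kermx.
apply/idP/idP => h.
  exact: submx_trans (nz_row_sub P) h.
by rewrite -(eqmxP e).
Qed.

Lemma mx11_eq0 (M : 'M[F]_1) : (M == 0) = (M 0 0 == 0).
Proof.
apply/eqP/eqP => [->|h]; first by rewrite mxE.
by rewrite [M]mx11_scalar h; apply/matrixP => i j; rewrite !mxE mul0rn.
Qed.

Lemma pair_lin (x y1 y2 : 'rV[F]_v) (b : F) :
  (x *m (y1 + b *: y2)^T) 0 0 = (x *m y1^T) 0 0 + b * (x *m y2^T) 0 0.
Proof. by rewrite linearD linearZ /= mulmxDr -scalemxAr !mxE. Qed.

Lemma hyp_of_y (y : 'rV[F]_v) : y != 0 ->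
  is_hyperplane (<<kermx y^T>>%MS) /\ forall P, ((P <= <<kermx y^T>>)%MS = kill P y).
Proof.
move=> ny; split.
  by rewrite /is_hyperplane genmx_id eqxx /= mxrank_gen mxrank_ker mxrank_tr rank_rV ny subn1 eqxx.
by move=> P; rewrite genmxE sub_kermx.
Qed.

Lemma y_of_hyp (H : 'M[F]_v) : (0 < v)%N -> is_hyperplane H ->
  exists y : 'rV[F]_v, forall P : 'M[F]_v, (P <= H)%MS = kill P y.
Proof.
move=> v0 /andP[/eqP gH /eqP rH].
have rk : \rank (kermx H^T) = 1%N by rewrite mxrank_ker mxrank_tr rH -{1}(prednK v0) subSnn.
pose y := nz_row (kermx H^T).
have ny : y != 0 by rewrite nz_row_eq0 -mxrank_eq0 rk.
have yk : (y <= kermx H^T)%MS := nz_row_sub _.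
have sH : (H <= kermx y^T)%MS.
  by rewrite sub_kermx -trmx_eq0 trmx_mul trmxK -sub_kermx.
have rk2 : \rank (kermx y^T) = \rank H by rewrite mxrank_ker mxrank_tr rank_rV ny rH subn1.
have e : (H == kermx y^T)%MS by rewrite -(mxrank_leqif_eq sH) rk2.
exists y => P; rewrite /kill -sub_kermx.
by rewrite (eqmxP e).
Qed.

Lemma sum_ind_card (T : finType) (p : pred T) : (\sum_(i : T) (p i : nat))%N = #|p|.
Proof. rewrite -sum1_card [RHS]big_mkcond /=; apply: eq_bigr => i _; by rewrite unfold_in; case: (p i). Qed.

Lemma sum_lin (e1 e2 : F) :
  (\sum_(b : F) ((e1 + b * e2 == 0)%R : nat))%N = if e2 != 0 then 1%N else if e1 == 0 then q else 0%N.
Proof.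
rewrite sum_ind_card; case: ifP => h2.
  rewrite -(card1 (- e1 / e2)); apply: eq_card => b; rewrite !inE.
  rewrite unfold_in /= addrC addr_eq0; apply/eqP/eqP => [h|->]; last by rewrite divfK.
  by rewrite -h mulfK.
move/negbFE/eqP: h2 => ->; case: ifP => h1.
  by apply: eq_card => b; rewrite unfold_in /= mulr0 addr0 h1.
by apply: eq_card0 => b; rewrite unfold_in /= mulr0 addr0 h1.
Qed.



Lemma part1 (e1 e2 : F) : ~~ ((e1 == 0) && (e2 == 0)) ->
  (((e2 == 0%R) : nat) + \sum_(b : F) ((e1 + b * e2 == 0)%R : nat))%N = 1%N.
Proof.
move=> h; rewrite sum_lin; have [e0|h2] := eqVneq e2 0 => //=.
by rewrite e0 eqxx andbT in h; rewrite (negbTE h).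
Qed.

Lemma part2 (e1 e2 : F) :
  (((e2 == 0%R) : nat) + \sum_(b : F) ((e1 + b * e2 == 0)%R : nat) = 1 %[mod q])%N.
Proof.
rewrite sum_lin; have [e0|h2] := eqVneq e2 0 => //=.
by case: (e1 == 0) => //; rewrite modnDr.
Qed.

Lemma sum_ind_set (T : finType) (p : pred T) : (\sum_(i : T) (p i : nat))%N = #|[set i | p i]|.
Proof. by rewrite sum_ind_card; apply: eq_card => i; rewrite inE unfold_in. Qed.

Lemma card_sep (T : finType) (A : {set T}) (p : pred T) :
  #|[set x in A | p x]| = (\sum_(x in A) (p x : nat))%N.
Proof.
rewrite -sum1_card [LHS]big_mkcond [RHS]big_mkcond /=; apply: eq_bigr => x _.
by rewrite inE; case: (x \in A); case: (p x).
Qed.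

Lemma q_gt1 : (1 < q)%N.
Proof.
have : #|[set (0 : F); 1]| = 2%N by rewrite cards2 eq_sym oner_eq0.
by move=> h; rewrite -h; apply: max_card.
Qed.

End LA.
Lemma quad_nat (w t : nat) : ((2*t+1)*w <= w*w + t*(t+1))%N.
Proof. have := @quadZ (Z.of_nat w) (Z.of_nat t) (Zle_0_nat w) (Zle_0_nat t). lia. Qed.

Section Bridge.
Local Open Scope Z_scope.
Lemma final_nat (q N n W1 W2 t : nat) : (0 < N)%N -> (1 < q)%N ->
  (q*W1 + n*(q*N) = n*(q*q*N))%N ->
  (q*q*W2 + 2*n*(n*(q*N)) + n*N = n*n*(q*q*N) + (n*(q*N) + n*n*N))%N ->
  ((2*t+1)*W1 <= W2 + q*q*N*(t*(t+1)))%N ->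
  ((Z.of_nat q-1)*(2*Z.of_nat t+1)*(Z.of_nat q*Z.of_nat q)*Z.of_nat n <=
   (Z.of_nat q-1)*(Z.of_nat q-1)*Z.of_nat n*Z.of_nat n + (Z.of_nat q-1)*Z.of_nat n
   + Z.of_nat t*(Z.of_nat t+1)*(Z.of_nat q*Z.of_nat q*Z.of_nat q*Z.of_nat q)).
Proof.
move=> h1 h2 h3 h4 h5.
apply: (@final_Z (Z.of_nat q) (Z.of_nat N) (Z.of_nat n) (Z.of_nat W1) (Z.of_nat W2) (Z.of_nat t)).
- lia.
- lia.
- lia.
- lia.
- move: h3; zify; lia.
- move: h4; zify; lia.
- move: h5; zify; lia.
Qed.

Lemma final_num_nat (q n a b : nat) : (1 < q)%N -> (n < q*q)%N -> n = (a * q + b)%N -> (b < q)%N -> (b <= a)%N ->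
  (forall t : nat, ((Z.of_nat q-1)*(2*Z.of_nat t+1)*(Z.of_nat q*Z.of_nat q)*Z.of_nat n <=
   (Z.of_nat q-1)*(Z.of_nat q-1)*Z.of_nat n*Z.of_nat n + (Z.of_nat q-1)*Z.of_nat n
   + Z.of_nat t*(Z.of_nat t+1)*(Z.of_nat q*Z.of_nat q*Z.of_nat q*Z.of_nat q))) ->
  b = a.
Proof.
move=> hq hn e hb hab ht.
have : Z.of_nat b = Z.of_nat a.
  apply: (@final_num (Z.of_nat q) (Z.of_nat n) (Z.of_nat a) (Z.of_nat b)).
  - lia.
  - move: e; zify; lia.
  - move: hb; zify; lia.
  - move: hab; zify; lia.
  - move: hn; zify; lia.
  - move=> t t0; have := ht (Z.to_nat t); rewrite Z2Nat.id //.
by move/Nat2Z.inj.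
Qed.

End Bridge.

Section Part1.
Variables (F : finFieldType) (v : nat) (C : {set 'M[F]_v}).
Hypothesis hpt : point_set C.
Local Notation q := #|F|.
Local Notation n := #|C|.
Local Notation kill := (@kill F v).
Definition Zc (y : 'rV[F]_v) := #|[set P in C | kill P y]|.

Lemma ZE y : Zc y = (\sum_(P in C) (kill P y : nat))%N.
Proof. exact: card_sep. Qed.

Lemma S1 : (\sum_(y : 'rV[F]_v) Zc y = n * q ^ v.-1)%N.
Proof.
under eq_bigr do rewrite ZE.
rewrite exchange_big /= -sum_nat_const; apply: eq_bigr => P PC.
by rewrite sum_ind_set card_kill1 //; apply: hpt.
Qed.

Lemma S2 : (\sum_(y : 'rV[F]_v) Zc y ^ 2 = n * (q ^ v.-1 + (n - 1) * q ^ (v - 2)))%N.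
Proof.
under eq_bigr do rewrite ZE expnS expn1 big_distrl /=.
under eq_bigr do under eq_bigr do rewrite big_distrr /=.
rewrite exchange_big /= -sum_nat_const; apply: eq_bigr => P PC.
rewrite exchange_big /= (bigD1 P) //=.
under eq_bigr do rewrite mulnb andbb.
rewrite sum_ind_set card_kill1 ?hpt //; congr (_ + _)%N.
have -> : (n - 1 = #|[pred Q in C | Q != P]|)%N.
  by rewrite (cardD1 P) PC add1n subSS subn0; apply: eq_card => Q; rewrite !inE andbC.
rewrite -sum_nat_const; apply: eq_bigr => Q /andP[QC nQP].
under eq_bigr do rewrite mulnb.
rewrite sum_ind_set.
have nPQ : P != Q by rewrite eq_sym.
have := card_kill2 (hpt PC) (hpt QC) nPQ.
by case.
Qed.


Lemma Z0 : Zc 0 = n.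
Proof. by apply: eq_card => P; rewrite !inE /kill trmx0 mulmx0 eqxx andbT. Qed.

Lemma Zle y : (Zc y <= n)%N.
Proof. by apply: subset_leq_card; apply/subsetP => P; rewrite inE => /andP[]. Qed.

Lemma part1_main (u : nat) :
  (forall H, is_hyperplane H -> hyp_count C H = u %[mod q]) ->
  (2 <= n)%N -> (n < q ^ 2)%N -> (q.+1 %| n)%N.
Proof.
move=> hdiv hn2 hlt.
have hq := q_gt1 F; have q0 : (0 < q)%N by apply: ltnW.
have [P1 [P2 [P1C P2C nP]]] : exists x y, [/\ x \in C, y \in C & x != y] by apply/card_gt1P.
have [v2 _] := card_kill2 (hpt P1C) (hpt P2C) nP.
set N := (q ^ (v - 2))%N.
have N0 : (0 < N)%N by rewrite expn_gt0 q0.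
have ev1 : (q ^ v.-1 = q * N)%N.
  have -> : v.-1 = (v - 2).+1 by move: v2; clear; lia.
  by rewrite /N expnS.
have ev : (q ^ v = q * q * N)%N.
  have -> : v = (v.-1).+1 by move: v2; clear; lia.
  by rewrite expnS ev1 mulnA.
have hZu : forall y, y != 0 -> Zc y = u %[mod q].
  move=> y ny; have [hh hP] := hyp_of_y ny; rewrite -(hdiv _ hh) /hyp_count /Zc.
  suff -> : #|[set P in C | kill P y]| = #|[set P in C | (P <= <<kermx y^T>>)%MS]| by [].
  by apply: eq_card => P; rewrite !inE hP.
have eS1 := S1; rewrite (bigD1 0) //= Z0 in eS1.
set X := (\sum_(y | y != 0%R) Zc y)%N in eS1.
have hX : (X = (q ^ v).-1 * u %[mod q])%N.
  rewrite /X -modn_summ; under eq_bigr => y ny do rewrite hZu //.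
  rewrite modn_summ sum_nat_const; congr (modn (muln _ _) _).
  by rewrite -[v in RHS]mul1n -(card_mx F 1 v) -(cardC1 (0 : 'rV[F]_v)); apply: eq_card.
have h1 : ((n + X) %% q = 0)%N by rewrite eS1 ev1 mulnCA modnMr.
have h2 : ((X + u) %% q = 0)%N.
  rewrite -modnDml hX modnDml -{2}(mul1n u) -mulnDl addn1 prednK ?expn_gt0 ?q0 //.
  by rewrite ev -!mulnA modnMr.
have hnu : (n = u %[mod q])%N.
  have e1 : (n %% q = (n + (X + u)) %% q)%N by rewrite -modnDmr h2 addn0.
  have e2 : ((n + (X + u)) %% q = u %% q)%N by rewrite addnA -modnDml h1 add0n.
  by rewrite e1 e2.
have hZn : forall y, (Zc y = n %[mod q])%N.
  move=> y; have [->|ny] := eqVneq y 0; first by rewrite Z0.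
  by rewrite hZu // hnu.
pose w y := ((n - Zc y) %/ q)%N.
have hw : forall y, (q * w y + Zc y = n)%N.
  move=> y; have d : (q %| n - Zc y)%N by rewrite -eqn_mod_dvd ?Zle // hZn.
  by rewrite mulnC divnK // subnK // Zle.
have cT : #|'rV[F]_v| = (q * q * N)%N by rewrite card_mx mul1n ev.
have E1 : (q * (\sum_y w y) + n * (q * N) = n * (q * q * N))%N.
  have e : (\sum_(y : 'rV[F]_v) (q * w y + Zc y) = \sum_(y : 'rV[F]_v) n)%N by apply: eq_bigr => y _; rewrite hw.
  rewrite big_split /= -big_distrr S1 sum_nat_const cT ev1 in e.
  by rewrite e mulnC.
have S2' : (\sum_(y : 'rV[F]_v) Zc y ^ 2 + n * N = n * (q * N) + n * n * N)%N.
  rewrite S2 ev1 -/N mulnDr -addnA -mulnDr -mulSnr subn1 prednK; last by apply: ltn_trans hn2.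
  by rewrite !mulnA.
have E2 : (q * q * (\sum_y w y * w y) + 2 * n * (n * (q * N)) + n * N = n * n * (q * q * N) + (n * (q * N) + n * n * N))%N.
  have e : (\sum_(y : 'rV[F]_v) (q * q * (w y * w y) + 2 * n * Zc y) = \sum_(y : 'rV[F]_v) (n * n + Zc y ^ 2))%N.
    apply: eq_bigr => y _; rewrite -(hw y); lia.
  rewrite big_split big_split /= -!big_distrr /= S1 sum_nat_const cT ev1 in e.
  by rewrite e -addnA S2'; congr (_ + _); rewrite mulnCA mulnC.
have I : forall t, ((2 * t + 1) * (\sum_y w y) <= (\sum_y w y * w y) + q * q * N * (t * (t + 1)))%N.
  move=> t; rewrite big_distrr /= -cT -sum_nat_const -big_split /=.
  apply: leq_sum => y _; exact: quad_nat.
have Q := fun t => final_nat N0 hq E1 E2 (I t).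
have [y1 [y2 hy]] : exists y1 y2, forall P, P \in C -> ~~ (kill P y1 && kill P y2).
  case: (boolP [exists p : 'rV[F]_v * 'rV[F]_v, [forall P in C, ~~ (kill P p.1 && kill P p.2)]]).
    by move=> /existsP[[y1 y2] /forall_inP h]; exists y1, y2.
  rewrite negb_exists => /forallP hall; exfalso.
  have step : (\sum_(p : 'rV[F]_v * 'rV[F]_v) (predT p : nat) <=
      \sum_(p : 'rV[F]_v * 'rV[F]_v) \sum_(P in C) ((kill P p.1 && kill P p.2) : nat))%N.
    apply: leq_sum => p _; have := hall p; rewrite negb_forall_in => /exists_inP[P PC hP].
    by rewrite (bigD1 P) //= negbK in hP *; rewrite hP.
  rewrite sum_ind_card exchange_big /= in step.
  have e3 : forall P, P \in C -> (\sum_(p : 'rV[F]_v * 'rV[F]_v) ((kill P p.1 && kill P p.2) : nat) = q * N * (q * N))%N.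
    move=> P PC; rewrite sum_ind_set -ev1 -(card_kill1 (hpt PC)) -cardsX.
    by apply: eq_card => -[a b]; rewrite !inE.
  rewrite (eq_bigr _ e3) sum_nat_const in step.
  have : (#|predT : pred ('rV[F]_v * 'rV[F]_v)| = q * q * N * (q * q * N))%N.
    by rewrite -cT -card_prod; apply: eq_card.
  move=> e4; rewrite e4 in step.
  have : (n * (q * N * (q * N)) < q * q * N * (q * q * N))%N.
    have -> : (q * q * N * (q * q * N) = q * q * (q * N * (q * N)))%N by rewrite -!mulnA; congr (_ * _); lia.
    by rewrite ltn_pmul2r ?muln_gt0 ?q0 ?N0 // mulnn.
  by rewrite ltnNge step.
have part : (n = Zc y2 + \sum_(b : F) Zc (y1 + b *: y2))%N.
  under eq_bigr do rewrite ZE. rewrite ZE.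
  rewrite exchange_big /= -big_split /= -sum1_card; apply: eq_bigr => P PC.
  have [x hx] := point_rep (hpt PC).
  under eq_bigr do rewrite hx mx11_eq0 pair_lin.
  rewrite hx mx11_eq0; apply/esym/part1.
  by have := hy P PC; rewrite !hx !mx11_eq0.
have lb : (n %% q + q * (n %% q) <= n)%N.
  rewrite {3}part; apply: leq_add; first by rewrite -(hZn y2) leq_mod.
  have : (\sum_(b : F) (n %% q) <= \sum_(b : F) Zc (y1 + b *: y2))%N.
    by apply: leq_sum => b _; rewrite -(hZn (y1 + b *: y2)) leq_mod.
  by rewrite sum_nat_const.
have hab : (n %% q <= n %/ q)%N.
  move: lb; rewrite {3}(divn_eq n q) addnC leq_add2r mulnC leq_pmul2r //.
have e := final_num_nat (n := n) hq _ (divn_eq n q) (ltn_pmod n q0) hab Q.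
rewrite mulnn in e; have {}e := e hlt.
by rewrite (divn_eq n q) e -mulnSr dvdn_mull.
Qed.

End Part1.

Lemma big_option (T : finType) (g : option T -> nat) :
  (\sum_(o : option T) g o = g None + \sum_(b : T) g (Some b))%N.
Proof.
by rewrite ![index_enum _]unlock [@Finite.enum in LHS]unlock /= big_cons big_map.
Qed.

Section Constr.
Variables (F : finFieldType) (v : nat) (I : finType) (x : I -> 'rV[F]_v).
Hypothesis xnz : forall i, x i != 0.
Hypothesis xinj : forall i j, (x i <= x j)%MS -> i = j.
Hypothesis v0 : (0 < v)%N.

Definition Cx := [set <<x i>>%MS | i : I].

Lemma Cx_point : point_set Cx.
Proof.
move=> P /imsetP[i _ ->].
by rewrite /is_point genmx_id eqxx mxrank_gen rank_rV xnz.
Qed.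

Lemma Cx_inj : injective (fun i => <<x i>>%MS).
Proof.
move=> i j e; apply: xinj.
by rewrite -genmxE /= e genmxE.
Qed.

Lemma Cx_card : #|Cx| = #|I|.
Proof. by rewrite card_imset //; apply: Cx_inj. Qed.

Lemma Cx_count H : is_hyperplane H ->
  exists y : 'rV[F]_v, hyp_count Cx H = (\sum_(i : I) (((x i *m y^T) 0%R 0%R == 0%R) : nat))%N.
Proof.
move=> hH; have [y hy] := y_of_hyp v0 hH; exists y; rewrite /hyp_count.
have -> : [set P in Cx | (P <= H)%MS] = [set <<x i>>%MS | i in [set i | x i *m y^T == 0]].
  apply/setP => P; rewrite inE; apply/andP/imsetP.
    case=> /imsetP[i _ ->]; rewrite hy /kill -sub_kermx genmxE sub_kermx => h.
    by exists i => //; rewrite inE.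
  case=> i; rewrite inE => h ->; split; first by apply: imset_f.
  by rewrite hy /kill -sub_kermx genmxE sub_kermx.
rewrite card_imset; last by apply: Cx_inj.
rewrite -sum_ind_set; apply: eq_bigr => i _; by rewrite mx11_eq0.
Qed.

End Constr.

Section ConstrA.
Variables (F : finFieldType) (k : nat).
Hypothesis k0 : (0 < k)%N.
Local Notation q := #|F|.

Definition dl (i : 'I_k) : 'rV[F]_k := delta_mx 0 i.

Definition xA (p : 'I_k * option F) : 'rV[F]_(k + k) :=
  match p.2 with Some b => row_mx (dl p.1) (b *: dl p.1) | None => row_mx 0 (dl p.1) end.

Lemma dlE i j : dl i 0 j = (i == j)%:R.
Proof. by rewrite /dl mxE eqxx /= eq_sym. Qed.

Lemma dl_pair i (z : 'rV[F]_k) : (dl i *m z^T) 0 0 = z 0 i.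
Proof. by rewrite /dl -rowE !mxE. Qed.

Lemma rowmx_pair (a b : 'rV[F]_k) (y : 'rV[F]_(k + k)) :
  (row_mx a b *m y^T) 0 0 = (a *m (lsubmx y)^T) 0 0 + (b *m (rsubmx y)^T) 0 0.
Proof. by rewrite -{1}(hsubmxK y) tr_row_mx mul_row_col mxE. Qed.

Lemma xA_nz p : xA p != 0.
Proof.
case: p => i [b|] /=; rewrite /xA /= row_mx_eq0 negb_and; apply/orP.
  by left; apply/eqP => /matrixP /(_ 0 i); rewrite dlE eqxx mxE; apply/eqP; rewrite oner_eq0.
by right; apply/eqP => /matrixP /(_ 0 i); rewrite dlE eqxx mxE; apply/eqP; rewrite oner_eq0.
Qed.

Lemma sub_rowmx (a b c d : 'rV[F]_k) : (row_mx a b <= row_mx c d)%MS ->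
  exists l : F, a = l *: c /\ b = l *: d.
Proof.
case/sub_rVP => l; rewrite scale_row_mx => /eq_row_mx [-> ->]; by exists l.
Qed.

Lemma xA_inj p p' : (xA p <= xA p')%MS -> p = p'.
Proof.
case: p => i o; case: p' => j o'; rewrite /xA /=.
have ent : forall (M N : 'rV[F]_k) t, M = N -> M 0 t = N 0 t by move=> M N t ->.
case: o => [b|]; case: o' => [c|] => /sub_rowmx [l [e1 e2]].
- have := ent _ _ i e1; rewrite !mxE !eqxx /=.
  case: (eqVneq i j) => [eij|_]; last by rewrite mulr0 => /eqP; rewrite oner_eq0.
  subst j; rewrite mulr1 => l1; have := ent _ _ i e2; rewrite !mxE !eqxx /= -l1 !mulr1 mul1r => ->.
  by [].
- by have := ent _ _ i e1; rewrite !mxE !eqxx /= mulr0 => /eqP; rewrite oner_eq0.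
- have := ent _ _ j e1; rewrite !mxE !eqxx /= mulr1 => l0.
  by have := ent _ _ i e2; rewrite !mxE !eqxx /= -l0 !mul0r => /eqP; rewrite oner_eq0.
- have := ent _ _ i e2; rewrite !mxE !eqxx /=.
  case: (eqVneq i j) => [eij|_]; last by rewrite mulr0 => /eqP; rewrite oner_eq0.
  by subst j.
Qed.

Lemma scale_entry (a : F) (M : 'M[F]_1) : (a *: M) 0 0 = a * M 0 0.
Proof. by rewrite mxE. Qed.

Lemma xA_count (y : 'rV[F]_(k + k)) :
  (\sum_(p : 'I_k * option F) (((xA p *m y^T) 0%R 0%R == 0%R) : nat) = k %[mod q])%N.
Proof.
rewrite (eq_bigr (fun p => (((xA (p.1, p.2) *m y^T) 0%R 0%R == 0%R) : nat))); last by case.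
rewrite -(pair_big predT predT (fun i o => (((xA (i, o) *m y^T) 0%R 0%R == 0%R) : nat))) /=.
rewrite -modn_summ.
rewrite (eq_bigr (fun i => 1%N)); first by rewrite sum_nat_const card_ord muln1.
move=> i _; rewrite big_option /xA /= rowmx_pair mul0mx dl_pair.
rewrite (_ : (0 : 'M[F]_1) 0 0 = 0) ?add0r; last by rewrite mxE.
under eq_bigr do rewrite rowmx_pair -scalemxAl scale_entry !dl_pair.
by rewrite part2 modn_small // q_gt1.
Qed.

End ConstrA.

Section ConstrB.
Variables (F : finFieldType).
Local Notation q := #|F|.

Definition xB (p : F * F) : 'rV[F]_(1 + (1 + 1)) :=
  row_mx (const_mx 1) (row_mx (const_mx p.1) (const_mx p.2)).

Lemma rowmx_pair2 m1 m2 (a : 'rV[F]_m1) (b : 'rV[F]_m2) (y : 'rV[F]_(m1 + m2)) :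
  (row_mx a b *m y^T) 0 0 = (a *m (lsubmx y)^T) 0 0 + (b *m (rsubmx y)^T) 0 0.
Proof. by rewrite -{1}(hsubmxK y) tr_row_mx mul_row_col mxE. Qed.

Lemma const_pair (c : F) (z : 'rV[F]_1) : ((const_mx c : 'rV[F]_1) *m z^T) 0 0 = c * z 0 0.
Proof. by rewrite !mxE big_ord1 !mxE. Qed.

Lemma xB_nz p : xB p != 0.
Proof.
rewrite /xB row_mx_eq0 negb_and; apply/orP; left.
by apply/eqP => /matrixP /(_ 0 0); rewrite !mxE; apply/eqP; rewrite oner_eq0.
Qed.

Lemma xB_inj p p' : (xB p <= xB p')%MS -> p = p'.
Proof.
case: p => a b; case: p' => c d; rewrite /xB /=.
case/sub_rVP => l; rewrite !scale_row_mx => /eq_row_mx [e1 /eq_row_mx [e2 e3]].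
have ent : forall (M N : 'rV[F]_1), M = N -> M 0 0 = N 0 0 by move=> M N ->.
have := ent _ _ e1; rewrite !mxE mulr1 => l1.
have := ent _ _ e2; rewrite !mxE -l1 mul1r => ->.
by have := ent _ _ e3; rewrite !mxE -l1 mul1r => ->.
Qed.

Lemma xB_count (y : 'rV[F]_(1 + (1 + 1))) :
  (\sum_(p : F * F) (((xB p *m y^T) 0%R 0%R == 0%R) : nat) = 0 %[mod q])%N.
Proof.
rewrite (eq_bigr (fun p => (((xB (p.1, p.2) *m y^T) 0%R 0%R == 0%R) : nat))); last by case.
rewrite -(pair_big predT predT (fun a b => (((xB (a, b) *m y^T) 0%R 0%R == 0%R) : nat))) /=.
under eq_bigr do under eq_bigr do rewrite /xB /= rowmx_pair2 rowmx_pair2 !const_pair mul1r addrA.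
under eq_bigr do rewrite sum_lin.
case: (eqVneq (rsubmx (rsubmx y) 0 0) 0) => [e0|ne] /=.
  rewrite -modn_summ (eq_bigr (fun _ => 0%N)) ?big1 // => a _.
  by case: ifP => _; rewrite ?modnn ?mod0n.
by rewrite sum1_card modnn mod0n.
Qed.

End ConstrB.

Theorem theorem5p15 :
  (forall (F : finFieldType) (v : nat) (C : {set 'M[F]_v}),
      point_set C -> divisible C #|F| ->
      (2 <= #|C| <= #|F| ^ 2)%N ->
      #|C| = (#|F| ^ 2)%N \/ (#|F|.+1 %| #|C|)%N)
  /\
  (forall (F : finFieldType) (n : nat),
      (2 <= n <= #|F| ^ 2)%N ->
      (n = (#|F| ^ 2)%N \/ (#|F|.+1 %| n)%N) ->
      exists (v : nat) (C : {set 'M[F]_v}),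
        point_set C /\ divisible C #|F| /\ #|C| = n).
Proof.
split.
  move=> F v C hpt [u hu] /andP[h2 hle].
  case: (ltngtP #|C| (#|F| ^ 2)) => [hlt| hgt |heq].
  - by right; apply: (part1_main hpt hu h2 hlt).
  - by rewrite leqNgt hgt in hle.
  - by left.
move=> F n /andP[h2 hle] [e|d].
  exists (1 + (1 + 1))%N, (Cx (@xB F)); split; first exact: Cx_point (@xB_nz F).
  split.
    exists 0%N => H hH; have [y ->] := Cx_count (@xB_inj F) (isT : (0 < 1 + (1 + 1))%N) hH.
    exact: xB_count.
  by rewrite (Cx_card (@xB_inj F)) card_prod e mulnn.
set k := (n %/ #|F|.+1)%N.
have ek : n = (k * #|F|.+1)%N by rewrite divnK.
have k0 : (0 < k)%N by move: h2; rewrite ek; case: (k).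
exists (k + k)%N, (Cx (@xA F k)); split; first exact: Cx_point (@xA_nz F k).
split.
  have vk : (0 < k + k)%N by rewrite addn_gt0 k0.
  exists k => H hH; have [y ->] := Cx_count (@xA_inj F k) vk hH.
  exact: xA_count.
by rewrite (Cx_card (@xA_inj F k)) card_prod card_ord card_option ek.
Qed.
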